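(* Let $R$ be an associative ring with identity, $M$ a left $R$-module which is projective in $\sigma[M]$, and $P\leq M$ a submodule. Then $P$ is a large prime submodule of $M$ if and only if $\eta^M_P$ is a prime preradical.
   Context: $\sigma[M]$ is the full subcategory of modules subgenerated by $M$. $\Lambda^{fi}(M)$ is the set of fully invariant submodules of $M$. For $N,L\leq M$, $N_ML=\sum\{f(N)\mid f\in\mathrm{Hom}_R(M,L)\}$. A large prime submodule of $M$ is a submodule $P\neq M$ such that for all $N,L\in\Lambda^{fi}(M)$, $N_ML\subseteq P$ implies $N\subseteq P$ or $L\subseteq P$. A preradical $r$ on $R$-Mod is a subfunctor of the identity functor; preradicals are ordered by $r\preceq s$ iff $r(X)\subseteq s(X)$ for all modules $X$; the product is $(r\cdot s)(X)=r(s(X))$; $\underline{1}$ is the identity functor. A preradical $r$ is prime if $r\neq\underline{1}$ and $s\cdot t\preceq r$ implies $s\preceq r$ or $t\preceq r$. For $P\leq M$, $\eta^M_P(L)=\bigcap\{f^{-1}(P)\mid f\in\mathrm{Hom}_R(L,M)\}$. *)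

(* Defs.v *)
From HB Require Import structures.
From mathcomp Require Import all_boot all_algebra.
Set Implicit Arguments. Unset Strict Implicit. Unset Printing Implicit Defensive.
Import GRing.Theory.
Local Open Scope ring_scope.

Section ModuleDefs.
Variable R : pzRingType.

Definition is_submod (M : lmodType R) (N : M -> Prop) : Prop :=
  [/\ N 0, (forall x y, N x -> N y -> N (x + y)) &
      (forall (a : R) x, N x -> N (a *: x))].

Definition subm_le (M : lmodType R) (N L : M -> Prop) : Prop :=
  forall x, N x -> L x.

Definition fully_invariant (M : lmodType R) (N : M -> Prop) : Prop :=
  is_submod N /\ forall (f : {linear M -> M}) x, N x -> N (f x).

(* N_M L = sum of f(N), f in Hom_R(M, L) (viewed as endomorphisms of M with
   image in L); the sum is the submodule generated by all these images. *)
Definition hom_prod (M : lmodType R) (N L : M -> Prop) : M -> Prop :=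
  fun x => forall S : M -> Prop, is_submod S ->
    (forall f : {linear M -> M}, (forall y, L (f y)) ->
       forall n, N n -> S (f n)) -> S x.

Definition large_prime (M : lmodType R) (P : M -> Prop) : Prop :=
  [/\ is_submod P, (exists x, ~ P x) &
      forall N L : M -> Prop, fully_invariant N -> fully_invariant L ->
        subm_le (hom_prod N L) P -> subm_le N P \/ subm_le L P].

Definition generated_by (M K : lmodType R) : Prop :=
  forall k : K, exists s : seq ({linear M -> K} * M),
    k = \sum_(p <- s) p.1 p.2.

Definition in_sigma (M N : lmodType R) : Prop :=
  exists (K : lmodType R) (i : {linear N -> K}),
    injective i /\ generated_by M K.

Definition projective_in_sigma (M : lmodType R) : Prop :=
  forall (A B : lmodType R) (g : {linear A -> B}) (f : {linear M -> B}),
    in_sigma M A -> in_sigma M B -> (forall b, exists a, g a = b) ->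
    exists h : {linear M -> A}, forall m, g (h m) = f m.

Definition preradical (r : forall X : lmodType R, X -> Prop) : Prop :=
  (forall X : lmodType R, is_submod (r X)) /\
  (forall (X Y : lmodType R) (f : {linear X -> Y}) x, r X x -> r Y (f x)).

Definition prerad_le (r s : forall X : lmodType R, X -> Prop) : Prop :=
  forall (X : lmodType R) x, r X x -> s X x.

(* (r . s)(X) = r (s X): r applied to the module s(X), presented as a module
   N together with an isomorphism i of N onto the submodule s(X) of X *)
Definition prerad_prod (r s : forall X : lmodType R, X -> Prop)
  : forall X : lmodType R, X -> Prop :=
  fun X x => exists (N : lmodType R) (i : {linear N -> X}),
    [/\ injective i, (forall y, s X y <-> exists n, i n = y) &
        exists n, r N n /\ i n = x].

Definition prime_preradical (r : forall X : lmodType R, X -> Prop) : Prop :=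
  [/\ preradical r,
      (exists (X : lmodType R) (x : X), ~ r X x) &
      forall s t, preradical s -> preradical t ->
        prerad_le (prerad_prod s t) r -> prerad_le s r \/ prerad_le t r].

Definition etaMP (M : lmodType R) (P : M -> Prop) : forall L : lmodType R, L -> Prop :=
  fun L x => forall f : {linear L -> M}, P (f x).

End ModuleDefs.

(* Main.v *)
Require Import Defs.
From HB Require Import structures.
From mathcomp Require Import all_boot all_algebra.
From Stdlib Require Import ClassicalEpsilon.
Set Implicit Arguments. Unset Strict Implicit. Unset Printing Implicit Defensive.
Import GRing.Theory.
Local Open Scope ring_scope.
Definition pb (R : pzRingType) (M : lmodType R) (S : M -> Prop) (x : M) : bool :=
  if excluded_middle_informative (S x) then true else false.

Lemma pbP (R : pzRingType) (M : lmodType R) (S : M -> Prop) x : pb S x <-> S x.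
Proof. rewrite /pb; case: excluded_middle_informative => //. Qed.

Definition subT (R : pzRingType) (M : lmodType R) (S : M -> Prop) (HS : is_submod S) : Type :=
  {x : M | pb S x}.

HB.instance Definition _ (R : pzRingType) (M : lmodType R) (S : M -> Prop) (HS : is_submod S) :=
  Choice.copy (subT HS) {x : M | pb S x}.


Lemma sub0 (R : pzRingType) (M : lmodType R) (S : M -> Prop) (HS : is_submod S) : pb S 0.
Proof. by apply/pbP; case: HS. Qed.
Lemma subD (R : pzRingType) (M : lmodType R) (S : M -> Prop) (HS : is_submod S) (x y : subT HS) :
  pb S (val x + val y).
Proof. have [_ H _] := HS; apply/pbP; apply: H; apply/pbP; exact: valP. Qed.
Lemma subZ (R : pzRingType) (M : lmodType R) (S : M -> Prop) (HS : is_submod S) a (x : subT HS) :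
  pb S (a *: val x).
Proof. have [_ _ H] := HS; apply/pbP; apply: H; apply/pbP; exact: valP. Qed.

Definition s0 R M S (HS : @is_submod R M S) : subT HS := exist (fun x => pb S x) 0 (sub0 HS).
Definition sadd R M S (HS : @is_submod R M S) (x y : subT HS) : subT HS := exist (fun x => pb S x) _ (subD x y).
Definition sscale R M S (HS : @is_submod R M S) a (x : subT HS) : subT HS := exist (fun x => pb S x) _ (subZ a x).
Definition sopp R M S (HS : @is_submod R M S) (x : subT HS) : subT HS := sscale (-1) x.

Lemma saddA R M S (HS : @is_submod R M S) : associative (@sadd R M S HS).
Proof. by move=> x y z; apply: val_inj; rewrite /= addrA. Qed.
Lemma saddC R M S (HS : @is_submod R M S) : commutative (@sadd R M S HS).
Proof. by move=> x y; apply: val_inj; rewrite /= addrC. Qed.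
Lemma sadd0 R M S (HS : @is_submod R M S) : left_id (s0 HS) (@sadd R M S HS).
Proof. by move=> x; apply: val_inj; rewrite /= add0r. Qed.
Lemma saddN R M S (HS : @is_submod R M S) : left_inverse (s0 HS) (@sopp R M S HS) (@sadd R M S HS).
Proof. by move=> x; apply: val_inj; rewrite /= scaleN1r addNr. Qed.

HB.instance Definition _ R M S (HS : @is_submod R M S) :=
  GRing.isZmodule.Build (subT HS) (@saddA R M S HS) (@saddC R M S HS) (@sadd0 R M S HS) (@saddN R M S HS).

Lemma sA R M S (HS : @is_submod R M S) a b (v : subT HS) : sscale a (sscale b v) = sscale (a * b) v.
Proof. by apply: val_inj; rewrite /= scalerA. Qed.
Lemma s1 R M S (HS : @is_submod R M S) : left_id 1 (@sscale R M S HS).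
Proof. by move=> x; apply: val_inj; rewrite /= scale1r. Qed.
Lemma sDr R M S (HS : @is_submod R M S) : right_distributive (@sscale R M S HS) +%R.
Proof. by move=> a x y; apply: val_inj; rewrite /= scalerDr. Qed.
Lemma sDl R M S (HS : @is_submod R M S) v : {morph (@sscale R M S HS)^~ v: a b / a + b}.
Proof. by move=> a b; apply: val_inj; rewrite /= scalerDl. Qed.

HB.instance Definition _ R M S (HS : @is_submod R M S) :=
  GRing.Zmodule_isLmodule.Build R (subT HS) (@sA R M S HS) (@s1 R M S HS) (@sDr R M S HS) (@sDl R M S HS).

Definition subLmod R M S (HS : @is_submod R M S) : lmodType R := subT HS.

Definition svalf R M S (HS : @is_submod R M S) (x : subT HS) : M := val x.
Lemma sval_lin R M S (HS : @is_submod R M S) : linear (@svalf R M S HS).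
Proof. by []. Qed.
HB.instance Definition _ R M S (HS : @is_submod R M S) :=
  GRing.isLinear.Build R (subT HS) M _ (@svalf R M S HS) (@sval_lin R M S HS).
Definition sincl R M S (HS : @is_submod R M S) : {linear subLmod HS -> M} := @svalf R M S HS.
From Stdlib Require Import Classical.

Definition coresf R (M : lmodType R) S (HS : @is_submod R M S) (N : lmodType R) (f : {linear N -> M})
  (H : forall y, S (f y)) (y : N) : subT HS := exist (fun x => pb S x) (f y) (proj2 (pbP S (f y)) (H y)).
Lemma cores_lin R M S (HS : @is_submod R M S) N f H : linear (@coresf R M S HS N f H).
Proof. by move=> a x y; apply: val_inj; rewrite /= linearP. Qed.
HB.instance Definition _ R M S (HS : @is_submod R M S) (N : lmodType R) f H :=
  GRing.isLinear.Build R N (subT HS) _ (@coresf R M S HS N f H) (@cores_lin R M S HS N f H).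
Definition cores R M S (HS : @is_submod R M S) (N : lmodType R) f H : {linear N -> subLmod HS} := @coresf R M S HS N f H.

Lemma eta_prerad (R : pzRingType) (M : lmodType R) (P : M -> Prop) :
  is_submod P -> preradical (etaMP P).
Proof.
move=> [P0 PD PZ]; split.
  move=> X; split.
  - by move=> f; rewrite linear0.
  - by move=> x y Hx Hy f; rewrite linearD; apply: PD.
  - by move=> a x Hx f; rewrite linearZ; apply: PZ.
by move=> X Y g x Hx f; exact: (Hx (f \o g)).
Qed.

Definition alpha (R : pzRingType) (M : lmodType R) (N : M -> Prop) : forall X : lmodType R, X -> Prop :=
  fun X x => forall S : X -> Prop, is_submod S ->
    (forall (f : {linear M -> X}) n, N n -> S (f n)) -> S x.

Lemma alpha_prerad (R : pzRingType) (M : lmodType R) (N : M -> Prop) : preradical (alpha N).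
Proof.
split.
  move=> X; split.
  - by move=> S [S0 _ _].
  - by move=> x y Hx Hy S HS H; have [_ SD _] := HS; apply: SD; [apply: Hx|apply: Hy].
  - by move=> a x Hx S HS H; have [_ _ SZ] := HS; apply: SZ; apply: Hx.
move=> X Y g x Hx S [S0 SD SZ] H.
apply: (Hx (fun z => S (g z))).
  split; first by rewrite linear0.
  - by move=> u v Hu Hv; rewrite linearD; apply: SD.
  - by move=> a u Hu; rewrite linearZ; apply: SZ.
by move=> f n Hn; exact: (H (g \o f) n Hn).
Qed.

Lemma alpha_incl (R : pzRingType) (M : lmodType R) (N : M -> Prop) n : N n -> @alpha R M N M n.
Proof. by move=> Hn S HS H; exact: (H idfun n Hn). Qed.

Lemma alpha_sub (R : pzRingType) (M : lmodType R) (L : M -> Prop) x :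
  fully_invariant L -> @alpha R M L M x -> L x.
Proof. by move=> [HL HLf] Hx; apply: Hx => // f n Hn; apply: HLf. Qed.

Theorem proposition4p10 (R : pzRingType) (M : lmodType R) (P : M -> Prop) :
  projective_in_sigma M -> is_submod P ->
  (large_prime P <-> prime_preradical (etaMP P)).
Proof.
move=> _ HP; split.
- move=> [_ [x0 Hx0] Hlp]; split; first exact: eta_prerad.
    by exists M, x0 => H; apply: Hx0; exact: (H idfun).
  move=> s t Hs Ht Hst.
  case: (classic (prerad_le s (etaMP P))) => Hs'; first by left.
  case: (classic (prerad_le t (etaMP P))) => Ht'; first by right.
  exfalso.
  have [X [x Hx]] : exists (X : lmodType R) (x : X), s X x /\ ~ etaMP P x.
    apply: NNPP => Hn; apply: Hs' => X0 x1 Hx1; apply: NNPP => Hne; apply: Hn; by exists X0, x1.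
  have [Y [y Hy]] : exists (Y : lmodType R) (y : Y), t Y y /\ ~ etaMP P y.
    apply: NNPP => Hn; apply: Ht' => X0 x1 Hx1; apply: NNPP => Hne; apply: Hn; by exists X0, x1.
  case: Hx => Hx1 /not_all_ex_not [f Hf].
  case: Hy => Hy1 /not_all_ex_not [g Hg].
  have FIs : fully_invariant (s M) by split; [exact: Hs.1 | move=> h z; exact: Hs.2].
  have FIt : fully_invariant (t M) by split; [exact: Ht.1 | move=> h z; exact: Ht.2].
  have Hprod : subm_le (hom_prod (s M) (t M)) P.
    move=> z Hz; apply: Hz => // h Hh n Hn.
    have HT := Ht.1 M.
    have Hsn : s (subLmod HT) (cores HT Hh n) by exact: Hs.2.
    have Hst' : prerad_prod s t (h n).
      exists (subLmod HT), (sincl HT); split.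
      + by move=> u v; exact: val_inj.
      + move=> w; split.
          by move=> Hw; exists (exist (fun x => pb (t M) x) w (proj2 (pbP _ _) Hw)).
        by move=> [u <-]; apply/(pbP (t M)); exact: (valP u).
      + by exists (cores HT Hh n).
    exact: (Hst _ _ Hst' idfun).
  case: (Hlp _ _ FIs FIt Hprod) => Hsub.
    by apply: Hf; apply: Hsub; exact: Hs.2.
  by apply: Hg; apply: Hsub; exact: Ht.2.
- move=> [Heta [X [x Hx]] Hprime]; split => //.
    case/not_all_ex_not: Hx => f Hf; by exists (f x).
  move=> N L FIN FIL Hprod.
  have Hst : prerad_le (prerad_prod (alpha N) (alpha L)) (etaMP P).
    move=> Z z [N' [i [Hinj Hiff [n' [Han' <-]]]]] h.
    have [P0 PD PZ] := HP.
    apply: (Han' (fun y => P (h (i y)))).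
      split; first by rewrite !linear0.
      - by move=> u v Hu Hv; rewrite !linearD; apply: PD.
      - by move=> a u Hu; rewrite !linearZ; apply: PZ.
    move=> g n Hn; apply: Hprod => S HS Hgen.
    have Hl : forall y, L ((h \o i \o g) y).
      move=> y; apply: alpha_sub => //=.
      apply: (alpha_prerad L).2; apply/Hiff; by exists (g y).
    exact: (Hgen (h \o i \o g) Hl n Hn).
  case: (Hprime _ _ (alpha_prerad N) (alpha_prerad L) Hst) => Hle.
    by left => n Hn; exact: (Hle M n (alpha_incl Hn) idfun).
  by right => n Hn; exact: (Hle M n (alpha_incl Hn) idfun).
Qed.
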